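(* Let $q$ be a prime power and let $\mathcal{C}$ be a $\mathcal{GRS}(n,k,d)$ code over $\mathbb{F}_q$ with $d=n-k+1$, distinct evaluation points $\alpha_0,\dots,\alpha_{n-1}\in\mathbb{F}_q$ and non-zero column multipliers $v_0,\dots,v_{n-1}$. Let $\vec c\in\mathcal{C}$ and $\vec r\in\mathbb{F}_q^n$, let $E=\{i : c_i\neq r_i\}$, $\epsilon=|E|$, and assume $\epsilon>d/2$. Let $\Lambda(x)=\prod_{i\in E}(x-\alpha_i)$. Let $H_1(x),H_2(x)\in\mathbb{F}_q[x]$ be coprime polynomials and $A(x),B(x)\in\mathbb{F}_q[x]$ polynomials such that $$\Lambda(x)=A(x)H_1(x)+B(x)H_2(x),\qquad \deg A=\epsilon-\deg H_1,\qquad \deg B\le \epsilon-d+\deg H_1 .$$ Let $L\le n$, $\tau$ and $\tau_L$ be positive integers, put $w_1=\tau-\deg H_1$ and $w_2=\tau-d+\deg H_1$, and assume $w_1,w_2\ge 0$. For $i=0,\dots,L-1$ let $P_i=(H_2(\alpha_i):-H_1(\alpha_i))\in\mathbb{P}^1_{\mathbb{F}_q}$. If $$\tau_L^2>L(2\tau-d),$$ then there exist positive integers $s,\ell$ and a non-zero polynomial $Q(x,y,z)=\sum_{j=0}^{\ell}Q_j(x)y^jz^{\ell-j}$ with $Q_j\in\mathbb{F}_q[x]$ such that $Q$ has a zero of multiplicity at least $s$ at $(\alpha_i,P_i)$ for every $i=0,\dots,L-1$ and $\deg_{(1,w_1,w_2)}Q<s\tau_L$. Furthermore, letting $\epsilon_L=|E\cap\{0,\dots,L-1\}|$,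 if $\epsilon=\tau$ and $\epsilon_L=\tau_L$, then every such $Q$ satisfies $Q(x,A(x),B(x))=0$.
   Context: A generalised Reed–Solomon code $\mathcal{GRS}(n,k,d)$ over $\mathbb{F}_q$ is $\{(v_0C(\alpha_0),\dots,v_{n-1}C(\alpha_{n-1})) : C\in\mathbb{F}_q[x],\ \deg C<k\}$. In the paper, $H_1,H_2$ are intermediate polynomials of the Extended Euclidean Algorithm run on $x^{d-1}$ and the syndrome polynomial of $\vec r$, and positions are indexed so that positions $0,\dots,L-1$ are the $L$ least reliable ones; only the stated properties are used. Points of $\mathbb{P}^1_{\mathbb{F}_q}$ are pairs $(a:b)\neq(0:0)$ up to non-zero scalar multiples. The $(1,w_1,w_2)$-weighted degree of $x^uy^jz^h$ is $u+w_1j+w_2h$, and of a polynomial the maximum over its monomials. A homogeneous $Q(x,y,z)$ has a zero of multiplicity at least $s$ at $(\alpha,(a:b))\in\mathbb{F}_q\times\mathbb{P}^1_{\mathbb{F}_q}$ if: when $b\neq0$, the polynomial $Q(x+\alpha,\,y+a/b,\,1)\in\mathbb{F}_q[x,y]$ has no monomial $x^uy^v$ with $u+v<s$; when $b=0$, the polynomial $Q(x+\alpha,1,z+0)\in\mathbb{F}_q[x,z]$ has no monomial $x^uz^v$ with $u+v<s$. *)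

(* Defs.v *)
From HB Require Import structures.
From mathcomp Require Import all_boot all_order all_algebra all_field.
Set Implicit Arguments. Unset Strict Implicit. Unset Printing Implicit Defensive.
Import Order.TTheory GRing.Theory Num.Theory.
Local Open Scope ring_scope.

(* A homogeneous polynomial Q(x,y,z) = \sum_{j=0}^{l} Q_j(x) y^j z^(l-j)
   is represented by l and its coefficient family Qs : 'I_l.+1 -> {poly F}. *)

(* Q(x+alpha, y+c, 1) as a bivariate polynomial: outer variable y,
   inner coefficients are polynomials in x. *)
Definition dehom_z (F : fieldType) (l : nat) (Qs : 'I_l.+1 -> {poly F})
  (alpha c : F) : {poly {poly F}} :=
  \sum_(j < l.+1) (Qs j \Po ('X + alpha%:P))%:P * ('X + c%:P%:P) ^+ j.

(* Q(x+alpha, 1, z+0) as a bivariate polynomial: outer variable z. *)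
Definition dehom_y (F : fieldType) (l : nat) (Qs : 'I_l.+1 -> {poly F})
  (alpha : F) : {poly {poly F}} :=
  \sum_(j < l.+1) (Qs j \Po ('X + alpha%:P))%:P * 'X ^+ (l - j).

Definition no_low_monomials (F : fieldType) (P : {poly {poly F}}) (s : nat) :=
  forall u v : nat, (u + v < s)%N -> (P`_v)`_u = 0.

(* Q has a zero of multiplicity at least s at (alpha, (a:b)). *)
Definition mult_at_least (F : fieldType) (l : nat) (Qs : 'I_l.+1 -> {poly F})
  (alpha a b : F) (s : nat) : Prop :=
  if b != 0 then no_low_monomials (dehom_z Qs alpha (a / b)) s
  else no_low_monomials (dehom_y Qs alpha) s.

Definition wdeg_lt (F : fieldType) (l : nat) (Qs : 'I_l.+1 -> {poly F})
  (w1 w2 bound : int) : Prop :=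
  forall (j : 'I_l.+1) (u : nat), (Qs j)`_u != 0 ->
    (u%:Z + w1 * (j : nat)%:Z + w2 * (l - j)%N%:Z < bound)%R.

Definition hpoly_nonzero (F : fieldType) (l : nat) (Qs : 'I_l.+1 -> {poly F}) :=
  exists j, Qs j != 0.

Definition hsubst (F : fieldType) (l : nat) (Qs : 'I_l.+1 -> {poly F})
  (A B : {poly F}) : {poly F} :=
  \sum_(j < l.+1) Qs j * A ^+ j * B ^+ (l - j).

(* Main.v *)
Require Import Defs.
From HB Require Import structures.
From mathcomp Require Import all_boot all_order all_algebra all_field.
From mathcomp Require Import zify ring.
Import Order.TTheory GRing.Theory Num.Theory.
Local Open Scope ring_scope.

Lemma comp_polyXn_ (R : comNzRingType) (p q : {poly R}) n :
  (p ^+ n) \Po q = (p \Po q) ^+ n.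
Proof.
elim: n => [|n IH]; first by rewrite !expr0 -polyC1 comp_polyC.
by rewrite !exprS comp_polyM IH.
Qed.

Lemma low_dvd (F : fieldType) (p : {poly F}) m :
  (forall u, (u < m)%N -> p`_u = 0) -> 'X^m %| p.
Proof.
move=> H; rewrite -(poly_take_drop m p).
have -> : take_poly m p = 0.
  by apply/polyP => i; rewrite coef_take_poly coef0; case: ifP => // /H.
by rewrite add0r dvdp_mull.
Qed.

Lemma dvdp_sum_ (F : fieldType) (I : finType) (d : {poly F}) (G : I -> {poly F}) :
  (forall i, d %| G i) -> d %| \sum_i G i.
Proof.
move=> H; apply: (big_ind (fun p => d %| p)) => // x y; apply: dvdp_add.
Qed.

Lemma shift_dvd (F : fieldType) (p : {poly F}) a s :
  'X^s %| p \Po ('X + a%:P) -> ('X - a%:P) ^+ s %| p.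
Proof.
case/dvdpP => g Hg.
have -> : p = (p \Po ('X + a%:P)) \Po ('X - a%:P).
  rewrite -comp_polyA comp_polyD comp_polyX comp_polyC.
  by rewrite subrK comp_polyXr.
by rewrite Hg comp_polyM comp_Xn_poly dvdp_mull.
Qed.

Lemma coef_XaddC_exp (R : comNzRingType) (C : R) j v :
  (('X + C%:P) ^+ j)`_v = C ^+ (j - v) *+ 'C(j, v).
Proof.
rewrite addrC exprDn coef_sum.
under eq_bigr => i _ do rewrite coefMn -polyC_exp coefCM coefXn.
case: (ltnP v j.+1) => hv.
  rewrite (bigD1 (Ordinal hv)) //= eqxx mulr1 big1 ?addr0 // => i /eqP hi.
  have : (v != i)%N by apply/eqP => e; apply: hi; apply: val_inj.
  by move/negPf ->; rewrite mulr0 mul0rn.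
rewrite bin_small // mulr0n big1 // => i _.
have : (v != i)%N by apply/eqP => e; move: (ltn_ord i); rewrite -e ltnNge hv.
by move/negPf ->; rewrite mulr0 mul0rn.
Qed.

Lemma hom_binom (R : comNzRingType) (C e b : R) j l : (j <= l)%N ->
  \sum_(v < l.+1) (('X + C%:P) ^+ j)`_v * e ^+ v * b ^+ (l - v)
  = (e + C * b) ^+ j * b ^+ (l - j).
Proof.
move=> hjl.
under eq_bigr => v _ do rewrite coef_XaddC_exp.
rewrite (bigID (fun v : 'I_l.+1 => (v < j.+1)%N)) /= [X in _ + X]big1 ?addr0; last first.
  by move=> i; rewrite -leqNgt => hi; rewrite bin_small // !mulr0n !mul0r.
have hj1 : (j.+1 <= l.+1)%N by [].
rewrite -(big_ord_widen l.+1 (fun v : nat => (C ^+ (j - v) *+ 'C(j, v) * e ^+ v * b ^+ (l - v))) hj1).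
rewrite (addrC e) exprDn mulr_suml.
apply: eq_bigr => i hi.
have := ltn_ord i => hi2.
have -> : (l - i = (j - i) + (l - j))%N by lia.
rewrite exprD exprMn; ring.
Qed.

Lemma prod_dvd (F : fieldType) (r : seq F) s (P : {poly F}) : uniq r ->
  (forall a, a \in r -> ('X - a%:P) ^+ s %| P) ->
  (\prod_(a <- r) ('X - a%:P)) ^+ s %| P.
Proof.
elim: r => [|a r IH] /=; first by rewrite big_nil expr1n dvd1p.
case/andP => har ur H.
have cop : coprimep (('X - a%:P) ^+ s) ((\prod_(b <- r) ('X - b%:P)) ^+ s).
  apply: coprimep_expl; apply: coprimep_expr.
  by rewrite coprimep_sym coprimep_XsubC root_prod_XsubC.
rewrite big_cons exprMn (Gauss_dvdp _ cop) H ?mem_head //=.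
apply: IH => // b hb; apply: H; rewrite in_cons hb orbT.
all: done.
Qed.

Lemma mult_dvd (F : fieldType) l (Qs : 'I_l.+1 -> {poly F}) (A B : {poly F}) (al h1 h2 : F) s :
  (h1 != 0) || (h2 != 0) ->
  A.[al] * h1 + B.[al] * h2 = 0 ->
  mult_at_least Qs al h2 (- h1) s ->
  ('X - al%:P) ^+ s %| hsubst Qs A B.
Proof.
move=> hnz hAB Hm; apply: shift_dvd.
set S := ('X + al%:P).
have eqc : hsubst Qs A B \Po S =
   \sum_(j < l.+1) (Qs j \Po S) * (A \Po S) ^+ j * (B \Po S) ^+ (l - j).
  rewrite /hsubst (big_morph (fun p => p \Po S) (fun p q => comp_polyD p q S) (comp_poly0 S)).
  by apply: eq_bigr => j _; rewrite !comp_polyM !comp_polyXn_.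
rewrite eqc.
have coef0 : forall p, (p \Po S)`_0 = p.[al].
  by move=> p; rewrite -horner_coef0 horner_comp /S hornerD hornerX hornerC add0r.
move: Hm; rewrite /mult_at_least.
have dvdsplit : forall (m : nat) (x y : {poly F}), 'X^(s - m) %| x -> 'X^m %| y -> 'X^s %| x * y.
  move=> m x y hx hy; apply: (dvdp_trans (dvdp_exp2l _ (_ : (s <= (s - m) + m)%N))).
    lia.
  by rewrite exprD dvdp_mul.
have Xdvd : forall (e : {poly F}) m, e`_0 = 0 -> 'X^m %| e ^+ m.
  move=> e m he; have h1' : 'X^1 %| e by apply: low_dvd => u; rewrite ltnS leqn0 => /eqP ->.
  by have := dvdp_exp2r m h1'; rewrite expr1.
case: ifP => hb H.
- set c := h2 / - h1.
  set e := A \Po S - c%:P * (B \Po S).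
  have h1n : h1 != 0 by rewrite -oppr_eq0.
  have He0 : e`_0 = 0.
    rewrite /e coefB coefCM !coef0 /c.
    have -> : A.[al] - h2 / - h1 * B.[al] = (A.[al] * h1 + B.[al] * h2) / h1.
      by field; rewrite h1n oppr_eq0.
    by rewrite hAB mul0r.
  have ha : A \Po S = e + c%:P * (B \Po S) by rewrite /e subrK.
  have -> : \sum_(j < l.+1) (Qs j \Po S) * (A \Po S) ^+ j * (B \Po S) ^+ (l - j) =
     \sum_(v < l.+1) (dehom_z Qs al c)`_v * e ^+ v * (B \Po S) ^+ (l - v).
    under eq_bigr => j _.
      rewrite -mulrA ha -hom_binom; last by rewrite -ltnS ltn_ord.
      rewrite mulr_sumr.
    over.
    rewrite exchange_big /=; apply: eq_bigr => v _.
    rewrite /dehom_z coef_sum mulr_suml mulr_suml; apply: eq_bigr => j _.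
    by rewrite coefCM !mulrA.
  apply: dvdp_sum_ => v; apply: dvdp_mulr; apply: (dvdsplit v); last exact: Xdvd.
  apply: low_dvd => u hu; apply: H; lia.
- have h10 : h1 = 0 by apply/eqP; rewrite -oppr_eq0; apply/negbFE.
  move: hnz hAB; rewrite h10 eqxx /= mulr0 add0r => h2n /eqP; rewrite mulf_eq0 (negPf h2n) orbF => /eqP hB.
  apply: dvdp_sum_ => j; apply: (dvdsplit (l - j)%N); first apply: dvdp_mulr; last first.
    by apply: Xdvd; rewrite coef0.
  apply: low_dvd => u hu.
  have := H u (l - j)%N; rewrite /dehom_y coef_sum.
  rewrite (bigD1 j) //= big1 ?addr0.
    by rewrite coefCM coefXn eqxx mulr1 => h; apply: h; lia.
  move=> i hij; rewrite coefCM coefXn.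
  have : ((l - j)%N != (l - i)%N).
    apply/eqP => e1; move/eqP: hij; apply; apply: val_inj.
    have := ltn_ord i; have := ltn_ord j; move=> /= ? ?; lia.
  by move/negPf ->; rewrite mulr0.
Qed.

Lemma part2 (F : fieldType) n (alpha : 'I_n -> F) (E : {set 'I_n}) (H1 H2 A B : {poly F})
  L (n1 n2 : nat) s l (Qs : 'I_l.+1 -> {poly F}) :
  injective alpha -> coprimep H1 H2 ->
  \prod_(i in E) ('X - (alpha i)%:P) = A * H1 + B * H2 ->
  (size A).-1 = n1 -> (B = 0 \/ ((size B).-1 <= n2)%N) ->
  (forall i : 'I_n, (i < L)%N -> mult_at_least Qs (alpha i) H2.[alpha i] (- H1.[alpha i]) s) ->
  (forall (j : 'I_l.+1) u, (Qs j)`_u != 0 ->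
     (u + n1 * j + n2 * (l - j) < s * #|[set i in E | (i < L)%N]|)%N) ->
  hsubst Qs A B = 0.
Proof.
move=> ainj cop hL hA hB Hm Hw.
set T := #|[set i in E | (i < L)%N]|.
set r := [seq alpha i | i <- enum [set i in E | (i < L)%N]].
have hdiv : (\prod_(a <- r) ('X - a%:P)) ^+ s %| hsubst Qs A B.
  apply: prod_dvd; first by rewrite map_inj_uniq // enum_uniq.
  move=> a /mapP [i]; rewrite mem_enum inE => /andP [iE iL] ->.
  apply: mult_dvd; last exact: Hm.
    case h0 : (H1.[alpha i] == 0) => //=.
    by apply: (coprimep_root cop); rewrite /root h0.
  have := congr1 (fun p => p.[alpha i]) hL.
  by rewrite /= (bigD1 i) //= hornerM hornerXsubC subrr mul0r hornerD !hornerM => <-.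
have hsz : (size (hsubst Qs A B) <= s * T)%N.
  rewrite /hsubst; apply: (big_ind (fun p : {poly F} => size p <= s * T)%N) => [|x y hx hy|j _].
  - by rewrite size_poly0.
  - by apply: leq_trans (size_polyD _ _) _; rewrite geq_max hx hy.
  case: (eqVneq (Qs j) 0) => [->|Qn]; first by rewrite !mul0r size_poly0.
  case: (eqVneq (B ^+ (l - j)) 0) => [->|Bn]; first by rewrite mulr0 size_poly0.
  have hu := Hw j (size (Qs j)).-1; rewrite -lead_coefE lead_coef_eq0 Qn in hu.
  have := hu isT => {}hu.
  have f1 := size_polyMleq (Qs j * A ^+ j) (B ^+ (l - j)).
  have f2 := size_polyMleq (Qs j) (A ^+ j).
  have f3 := size_poly_exp_leq A j.
  have f4 := size_poly_exp_leq B (l - j).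
  have f5 : ((size B).-1 * (l - j) <= n2 * (l - j))%N.
    case: hB => [B0|hB]; last by rewrite leq_mul2r hB orbT.
    case hm : (l - j)%N => [|m]; first by rewrite !muln0.
    by move: Bn; rewrite B0 hm expr0n /= mulr0n eqxx.
  have f6 : (0 < size (Qs j))%N by rewrite size_poly_gt0.
  rewrite hA in f3.
  nia.
apply/eqP; apply: contraTT hsz => hnz; rewrite -ltnNge.
have pn : \prod_(a <- r) ('X - a%:P) != 0 by rewrite -size_poly_eq0 size_prod_XsubC.
have := dvdp_leq hnz hdiv.
have e1 := size_exp (\prod_(a <- r) ('X - a%:P)) s.
have e2 : (0 < size ((\prod_(a <- r) ('X - a%:P)) ^+ s))%N by rewrite size_poly_gt0 expf_neq0.
rewrite size_prod_XsubC /= size_map -cardE -/T in e1.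
have e3 := prednK e2; rewrite e1 in e3; rewrite -e3; by rewrite mulnC.
Qed.

Local Close Scope ring_scope.

Lemma card_pairs (A B : finType) (P : A -> B -> bool) :
  #|[set p : A * B | P p.1 p.2]| = \sum_(a : A) #|[set b | P a b]|.
Proof.
rewrite -sum1_card (eq_bigl (fun p : A * B => true && P p.1 p.2)); last by move=> p; rewrite inE.
rewrite -(pair_big_dep xpredT P (fun _ _ => 1%N)); apply: eq_bigr => a _.
by rewrite -sum1_card; apply: eq_bigl => b; rewrite inE.
Qed.

Lemma sum_lt (N m : nat) : (\sum_(u < N) (u < m : nat))%N = minn m N.
Proof.
elim: N => [|N IH]; first by rewrite big_ord0 minn0.
rewrite big_ord_recr /= IH; case: (ltnP N m) => h /=; lia.
Qed.

Lemma card_lt (N m : nat) : #|[set u : 'I_N | (u < m)%N]| = minn m N.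
Proof.
rewrite -sum1_card -sum_lt big_mkcond /=; apply: eq_bigr => u _.
by rewrite inE; case: (u < m)%N.
Qed.

Lemma sum_id2 l : (\sum_(j < l.+1) (j : nat) * 2 = l * l.+1)%N.
Proof.
elim: l => [|l IH]; first by rewrite big_ord1.
rewrite big_ord_recr /= IH; lia.
Qed.

Lemma sum_rev2 l : (\sum_(j < l.+1) (l - j) * 2 = l * l.+1)%N.
Proof.
elim: l => [|l IH]; first by rewrite big_ord1.
rewrite big_ord_recl.
rewrite (eq_bigr (fun j : 'I_l.+1 => (l - j) * 2)%N); last by move=> j _; rewrite lift0 subSS.
rewrite IH /=; nia.
Qed.

Lemma sum_s2 s : (\sum_(u < s) (s - u) * 2 = s * s.+1)%N.
Proof.
elim: s => [|s IH]; first by rewrite big_ord0.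
rewrite big_ord_recl.
rewrite (eq_bigr (fun j : 'I_s => (s - j) * 2)%N); last by move=> j _; rewrite lift0 subSS.
rewrite IH /=; nia.
Qed.

Lemma choose_sl (L n1 n2 T : nat) : (0 < T)%N -> (L * (n1 + n2) < T ^ 2)%N ->
  exists s l, [/\ 0 < s, 0 < l & L * (s * s.+1) + (n1 + n2) * (l * l.+1) < 2 * (l.+1 * (s * T))]%N.
Proof.
move=> hT hW.
case: (eqVneq (n1 + n2)%N 0%N) => hW0.
  exists 1%N, L.+1; split => //; rewrite hW0; nia.
set W := (n1 + n2)%N in hW hW0 *; set t := L.+1.
have Wp : (0 < W)%N by rewrite lt0n.
exists (t * W)%N, (t * T)%N; split; [nia|nia|].
have key : (L * (t * W).+1 < t * T ^ 2 + T)%N.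
  have h1 : (t * (L * W).+1 <= t * T ^ 2)%N by rewrite leq_mul2l hW orbT.
  rewrite /t in h1 *; nia.
have e1 : (L * (t * W * (t * W).+1) + W * (t * T * (t * T).+1) =
           t * W * (L * (t * W).+1 + T * (t * T).+1))%N by ring.
have e2 : (2 * ((t * T).+1 * (t * W * T)) = t * W * (2 * (T * (t * T).+1)))%N by ring.
rewrite e1 e2 ltn_pmul2l; last by rewrite muln_gt0 Wp.
nia.
Qed.
Local Open Scope ring_scope.
Section Core.
Variables (F : finFieldType) (n : nat) (alpha : 'I_n -> F) (H1 H2 : {poly F}).
Variables (L n1 n2 T s l : nat).
Hypothesis hL : (L <= n)%N.

Let N := (s * T).+1.
Definition Qz (z : {ffun 'I_l.+1 * 'I_N -> F}) (j : 'I_l.+1) : {poly F} :=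
  \poly_(u < N) z (j, inord u).
Definition cf (z : {ffun 'I_l.+1 * 'I_N -> F}) (i : 'I_n) (u v : nat) : F :=
  if - H1.[alpha i] != 0 then
    ((dehom_z (Qz z) (alpha i) (H2.[alpha i] / - H1.[alpha i]))`_v)`_u
  else ((dehom_y (Qz z) (alpha i))`_v)`_u.
Definition Phi (z : {ffun 'I_l.+1 * 'I_N -> F}) : {ffun ('I_L * 'I_s) * 'I_s -> F} :=
  [ffun p : ('I_L * 'I_s) * 'I_s => if (p.1.2 + p.2 < s)%N then cf z (widen_ord hL p.1.1) p.1.2 p.2 else 0].

Lemma QzB x y j : Qz (x - y) j = Qz x j - Qz y j.
Proof. apply/polyP => u; rewrite coefB !coef_poly; case: ifP => _; [by rewrite !ffunE | by rewrite subr0]. Qed.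

Lemma dzB x y a c : dehom_z (Qz (x - y)) a c = dehom_z (Qz x) a c - dehom_z (Qz y) a c.
Proof.
rewrite /dehom_z -sumrB; apply: eq_bigr => j _.
by rewrite QzB comp_polyB polyCB mulrBl.
Qed.

Lemma dyB x y a : dehom_y (Qz (x - y)) a = dehom_y (Qz x) a - dehom_y (Qz y) a.
Proof.
rewrite /dehom_y -sumrB; apply: eq_bigr => j _.
by rewrite QzB comp_polyB polyCB mulrBl.
Qed.

Lemma PhiB x y : Phi (x - y) = Phi x - Phi y.
Proof.
apply/ffunP => p; rewrite !ffunE; case: ifP => _; last by rewrite subr0.
by rewrite /cf; case: ifP => _; rewrite ?dzB ?dyB !coefB.
Qed.

Definition U := [set p : 'I_l.+1 * 'I_N | (p.2 + n1 * p.1 + n2 * (l - p.1) < s * T)%N].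
Definition K := [set p : ('I_L * 'I_s) * 'I_s | (p.1.2 + p.2 < s)%N].

Lemma cardU : (l.+1 * (s * T) <= #|U| + \sum_(j < l.+1) (n1 * j + n2 * (l - j)))%N.
Proof.
rewrite /U (@card_pairs _ _ (fun (a : 'I_l.+1) (b : 'I_N) => (b + n1 * a + n2 * (l - a) < s * T)%N)).
rewrite -big_split /=.
have -> : (l.+1 * (s * T) = \sum_(j < l.+1) (s * T))%N by rewrite sum_nat_const card_ord.
apply: leq_sum => j _.
have -> : [set b : 'I_N | (b + n1 * j + n2 * (l - j) < s * T)%N] =
          [set b : 'I_N | (b < s * T - (n1 * j + n2 * (l - j)))%N].
  by apply/setP => b; rewrite !inE; apply/idP/idP => h; lia.
rewrite card_lt /N; lia.
Qed.

Lemma cardK : (#|K| * 2 = L * (s * s.+1))%N.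
Proof.
rewrite /K (@card_pairs _ _ (fun (a : 'I_L * 'I_s) (b : 'I_s) => (a.2 + b < s)%N)).
rewrite (eq_bigr (fun a : 'I_L * 'I_s => (s - a.2)%N)); last first.
  move=> a _.
  have -> : [set b : 'I_s | (a.2 + b < s)%N] = [set b : 'I_s | (b < s - a.2)%N].
    by apply/setP => b; rewrite !inE; apply/idP/idP => h; lia.
  rewrite card_lt; lia.
rewrite -(pair_bigA _ (fun (i : 'I_L) (u : 'I_s) => (s - u)%N)) /=.
by rewrite sum_nat_const card_ord -mulnA big_distrl /= sum_s2.
Qed.

Lemma countUK : (L * (s * s.+1) + (n1 + n2) * (l * l.+1) < 2 * (l.+1 * (s * T)))%N ->
  (#|K| < #|U|)%N.
Proof.
move=> h.
have hc := cardU.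
have hk := cardK.
have hs : ((\sum_(j < l.+1) (n1 * j + n2 * (l - j))) * 2 = (n1 + n2) * (l * l.+1))%N.
  rewrite big_distrl /=.
  under eq_bigr do rewrite mulnDl; rewrite big_split /=.
  rewrite (eq_bigr (fun j : 'I_l.+1 => n1 * (j * 2))%N); last by move=> j _; rewrite mulnA.
  rewrite [X in (_ + X)%N](eq_bigr (fun j : 'I_l.+1 => n2 * ((l - j) * 2))%N); last by move=> j _; rewrite mulnA.
  by rewrite -!big_distrr /= sum_id2 sum_rev2 mulnDl.
move: hc hk hs h.
generalize (\sum_(j < l.+1) (n1 * j + n2 * (l - j)))%N => S.
generalize #|K| #|U| => k u.
nia.
Qed.


Lemma exists_Q : (#|K| < #|U|)%N ->
  exists Qs : 'I_l.+1 -> {poly F},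
  [/\ hpoly_nonzero Qs,
      (forall i : 'I_n, (i < L)%N -> mult_at_least Qs (alpha i) H2.[alpha i] (- H1.[alpha i]) s)
    & forall (j : 'I_l.+1) u, (Qs j)`_u != 0 -> (u + n1 * j + n2 * (l - j) < s * T)%N].
Proof.
move=> hUK.
set S := pffun_on (0 : F) U predT.
set Tt := pffun_on (0 : F) K predT.
have cardF : (1 < #|(predT : {pred F})|)%N.
  by apply/card_gt1P; exists 0, 1; rewrite !inE eq_sym oner_neq0.
have PhiT : forall x, Phi x \in Tt.
  move=> x; apply/pffun_onP; split; last by move=> ? _.
  apply/subsetP => p; rewrite inE ffunE /K inE.
  by case: ifP => //; rewrite eqxx.
have : ~~ [forall x in S, forall y in S, (Phi x == Phi y) ==> (x == y)].
  apply/negP => hinj.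
  have inj : {in S &, injective Phi}.
    move=> x y xS yS e; apply/eqP.
    by move/forall_inP: hinj => /(_ x xS) /forall_inP /(_ y yS) /implyP; apply; rewrite e.
  have sub : [set Phi x | x in S] \subset Tt by apply/subsetP => y /imsetP [x _ ->].
  have := subset_leq_card sub.
  by rewrite card_in_imset // !card_pffun_on leqNgt ltn_exp2l // hUK.
move/forall_inPn => [x xS /forall_inPn [y yS]]; rewrite negb_imply => /andP [/eqP exy nxy].
set z := x - y.
have zsupp : forall p, p \notin U -> z p = 0.
  move=> p pU; rewrite /z !ffunE.
  have h0 : forall w, w \in S -> w p = 0.
    move=> w /pffun_onP [/subsetP sub _]; apply/eqP; apply: contraNT pU => wp.
    by apply: sub; rewrite inE.
  by rewrite h0 // h0 // subrr.
have z0 : Phi z = 0 by rewrite /z PhiB exy subrr.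
exists (Qz z); split.
- case: (pickP (fun p => z p != 0)) => [p hp | h]; last first.
    move: nxy; rewrite -subr_eq0 -/z; case/negP; apply/eqP/ffunP => p.
    by rewrite [RHS]ffunE; move/negbFE: (h p) => /eqP.
  exists p.1; apply/eqP => Q0; move/eqP: hp; apply.
  have := congr1 (fun q : {poly F} => q`_p.2) Q0; rewrite coef0 coef_poly ltn_ord.
  by rewrite inord_val -surjective_pairing.
- move=> i iL; rewrite /mult_at_least.
  case: ifP => hb u v huv.
  + have us : (u < s)%N by lia.
    have vs : (v < s)%N by lia.
    have := congr1 (fun f : {ffun ('I_L * 'I_s) * 'I_s -> F} => f ((Ordinal iL, Ordinal us), Ordinal vs)) z0.
    rewrite !ffunE /= huv /cf.
    have -> : widen_ord hL (Ordinal iL) = i by apply: val_inj.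
    by rewrite hb.
  + have us : (u < s)%N by lia.
    have vs : (v < s)%N by lia.
    have := congr1 (fun f : {ffun ('I_L * 'I_s) * 'I_s -> F} => f ((Ordinal iL, Ordinal us), Ordinal vs)) z0.
    rewrite !ffunE /= huv /cf.
    have -> : widen_ord hL (Ordinal iL) = i by apply: val_inj.
    by rewrite hb.
- move=> j u; rewrite coef_poly; case: ifP => hu; last by rewrite eqxx.
  move=> hz; have : (j, inord u) \in U.
    by apply: contraNT hz => hU; rewrite zsupp.
  by rewrite inE /= inordK.
Qed.

End Core.
Local Open Scope ring_scope.
Theorem proposition2 (F : finFieldType) (n k : nat)
  (alpha : 'I_n -> F) (v : 'I_n -> F)
  (c r : 'I_n -> F) (H1 H2 A B : {poly F}) (L tau tauL : nat) :
  let d : int := n%:Z - k%:Z + 1 in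
  injective alpha ->
  (forall i, v i != 0) ->
  (exists C : {poly F}, (size C <= k)%N /\ forall i, c i = v i * C.[alpha i]) ->
  let E := [set i | c i != r i] in
  let eps : nat := #|E| in
  d < 2 * eps%:Z ->
  let Lambda := \prod_(i in E) ('X - (alpha i)%:P) in
  coprimep H1 H2 ->
  Lambda = A * H1 + B * H2 ->
  H1 != 0 -> A != 0 ->
  (size A).-1%:Z = eps%:Z - (size H1).-1%:Z ->
  (B = 0 \/ (size B).-1%:Z <= eps%:Z - d + (size H1).-1%:Z) ->
  (L <= n)%N -> (0 < tau)%N -> (0 < tauL)%N ->
  let w1 : int := tau%:Z - (size H1).-1%:Z in
  let w2 : int := tau%:Z - d + (size H1).-1%:Z in
  0 <= w1 -> 0 <= w2 ->
  (L%:Z * (2 * tau%:Z - d) < tauL%:Z ^+ 2) ->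
  (exists (s l : nat) (Qs : 'I_l.+1 -> {poly F}),
      [/\ (0 < s)%N, (0 < l)%N, hpoly_nonzero Qs,
          (forall i : 'I_n, (i < L)%N ->
             mult_at_least Qs (alpha i) H2.[alpha i] (- H1.[alpha i]) s)
        & wdeg_lt Qs w1 w2 (s%:Z * tauL%:Z)])
  /\
  (let epsL : nat := #|[set i in E | (i < L)%N]| in
   eps = tau -> epsL = tauL ->
   forall (s l : nat) (Qs : 'I_l.+1 -> {poly F}),
     (0 < s)%N -> (0 < l)%N -> hpoly_nonzero Qs ->
     (forall i : 'I_n, (i < L)%N ->
        mult_at_least Qs (alpha i) H2.[alpha i] (- H1.[alpha i]) s) ->
     wdeg_lt Qs w1 w2 (s%:Z * tauL%:Z) ->
     hsubst Qs A B = 0).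
Proof.
move=> d ainj vnz hC E eps hd Lambda cop hLam H1n An hA hB hLn tau0 tauL0 w1 w2 w10 w20 hineq.
have [n1 hn1] : exists n1 : nat, w1 = n1%:Z by exists `|w1|%N; rewrite gez0_abs.
have [n2 hn2] : exists n2 : nat, w2 = n2%:Z by exists `|w2|%N; rewrite gez0_abs.
have hW : (L * (n1 + n2) < tauL ^ 2)%N.
  have e : w1 + w2 = 2 * tau%:Z - d by rewrite /w1 /w2; ring.
  move: hineq; rewrite -e hn1 hn2; clear.
  nia.
split.
- have [s [l [s0 l0 hc]]] := @choose_sl L n1 n2 tauL tauL0 hW.
  have [Qs [q1 q2 q3]] := @exists_Q F n alpha H1 H2 L n1 n2 tauL s l hLn (@countUK n L n1 n2 tauL s l hLn hc).
  exists s, l, Qs; split => //.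
  move=> j u /q3; rewrite hn1 hn2; clear; lia.
- move=> epsL heps hepsL s l Qs s0 l0 hnz hm hw.
  apply: (@part2 F n alpha E H1 H2 A B L n1 n2 s l Qs ainj cop hLam _ _ hm).
  + move: (hA) (hn1); rewrite /w1 heps; clear; move: (size A).-1 (size H1).-1 => a h; lia.
  + case: hB => [->|hb]; [by left | right].
    by move: hb hn2; rewrite /w2 heps; clear; move: (size B).-1 (size H1).-1 => a h; lia.
  + move=> j u /hw; rewrite hn1 hn2 -hepsL /epsL; clear; move: #|_| => t; nia.
Qed.
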